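(* Let $p\ge 2$, $w\ge 0$, $z\in\mathbb{R}^{p-1}$. For $\lambda>0$ let $(\hat\beta^+(\lambda),\hat\beta^-(\lambda),\hat\theta(\lambda))$ be the unique solution of \[ \min_{\beta^\pm\in\mathbb{R},\,\theta\in\mathbb{R}^{p-1}}\ \frac12\bigl(w-(\beta^+-\beta^-)\bigr)^2+\frac12\|z-\theta\|_2^2+\lambda(\beta^++\beta^-)+\lambda\|\theta\|_1 \quad\text{s.t. } \beta^+\ge0,\ \beta^-\ge0,\ \|\theta\|_1\le\beta^++\beta^-. \] Then for each coordinate $k\in\{1,\dots,p-1\}$, the function $\lambda\mapsto|\hat\theta_k(\lambda)|$ is non-increasing on $(0,\infty)$.
   Context: $\|\cdot\|_1$ and $\|\cdot\|_2$ denote the $\ell_1$ and Euclidean norms. The solution of the displayed problem exists and is unique for every $\lambda>0$. *)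

(* Defs.v *)
From HB Require Import structures.
From mathcomp Require Import all_boot all_order all_algebra.
From mathcomp Require Import reals.
Set Implicit Arguments. Unset Strict Implicit. Unset Printing Implicit Defensive.
Import Order.TTheory GRing.Theory Num.Theory.
Local Open Scope ring_scope.

Definition l1norm (R : realType) (n : nat) (v : 'rV[R]_n) : R :=
  \sum_(i < n) `|v 0 i|.

Definition sqnorm2 (R : realType) (n : nat) (v : 'rV[R]_n) : R :=
  \sum_(i < n) (v 0 i) ^+ 2.

Definition obj (R : realType) (n : nat) (w : R) (z : 'rV[R]_n) (lam : R)
    (bp bm : R) (th : 'rV[R]_n) : R :=
  2^-1 * (w - (bp - bm)) ^+ 2 + 2^-1 * sqnorm2 (z - th)
  + lam * (bp + bm) + lam * l1norm th.

Definition feasible (R : realType) (n : nat) (bp bm : R) (th : 'rV[R]_n) : Prop :=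
  0 <= bp /\ 0 <= bm /\ l1norm th <= bp + bm.

Definition is_unique_solution (R : realType) (n : nat) (w : R) (z : 'rV[R]_n)
    (lam : R) (bp bm : R) (th : 'rV[R]_n) : Prop :=
  feasible bp bm th /\
  (forall bp' bm' th', feasible bp' bm' th' ->
      obj w z lam bp bm th <= obj w z lam bp' bm' th') /\
  (forall bp' bm' th', feasible bp' bm' th' ->
      obj w z lam bp' bm' th' <= obj w z lam bp bm th ->
      (bp', bm', th') = (bp, bm, th)).

(* Main.v *)
Require Import Defs.
From HB Require Import structures.
From mathcomp Require Import all_boot all_order all_algebra.
From mathcomp Require Import reals.
From mathcomp Require Import ring lra.
Import Order.TTheory GRing.Theory Num.Theory.
Local Open Scope ring_scope.

Section S.
Variable R : realType.

Lemma step1 n (w : R) (z : 'rV[R]_n) (l1 l2 : R) Pa Ma (ta : 'rV[R]_n) Pb Mb tb :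
  0 < l1 -> l1 < l2 -> feasible Pa Ma ta -> feasible Pb Mb tb ->
  (forall bp' bm' th', feasible bp' bm' th' ->
      obj w z l1 Pa Ma ta <= obj w z l1 bp' bm' th') ->
  (forall bp' bm' th', feasible bp' bm' th' ->
      obj w z l2 Pb Mb tb <= obj w z l2 bp' bm' th') ->
  l1norm tb <= l1norm ta.
Proof.
move=> h1 h12 [hPa [hMa hTa]] [hPb [hMb hTb]] oa ob.
rewrite leNgt; apply/negP => hlt.
case: (leP (l1norm tb) (Pa + Ma)) => hc.
- have A := oa Pa Ma tb (conj hPa (conj hMa hc)).
  have B := ob Pb Mb ta (conj hPb (conj hMb (ltW (lt_le_trans hlt hTb)))).
  move: A B; rewrite /obj.
  have : 0 < (l2 - l1) * (l1norm tb - l1norm ta) by rewrite mulr_gt0 // subr_gt0.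
  lra.
- have A := oa Pb Mb tb (conj hPb (conj hMb hTb)).
  have B := ob Pa Ma ta (conj hPa (conj hMa hTa)).
  move: A B; rewrite /obj.
  have : 0 < (l2 - l1) * ((Pb + Mb + l1norm tb) - (Pa + Ma + l1norm ta)).
    by rewrite mulr_gt0 // subr_gt0; lra.
  lra.
Qed.


Lemma step2 n (w : R) (z : 'rV[R]_n) (l1 l2 : R) Pa Ma (a : 'rV[R]_n) Pb Mb b :
  0 < l1 -> 0 < l2 -> feasible Pa Ma a -> feasible Pb Mb b ->
  (forall bp' bm' th', feasible bp' bm' th' ->
      obj w z l1 Pa Ma a <= obj w z l1 bp' bm' th') ->
  (forall bp' bm' th', feasible bp' bm' th' ->
      obj w z l2 Pb Mb b <= obj w z l2 bp' bm' th') ->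
  l1norm b <= l1norm a ->
  forall k, `|b 0 k| <= `|a 0 k|.
Proof.
move=> h1 h2 [hPa [hMa hTa]] [hPb [hMb hTb]] oa ob hab k.
rewrite leNgt; apply/negP => hk.
pose pv (i : 'I_n) : R := if `|a 0 i| <= `|b 0 i| then a 0 i else b 0 i.
pose qv (i : 'I_n) : R := if `|a 0 i| <= `|b 0 i| then b 0 i else a 0 i.
pose Tu : R := \sum_(i < n) `|pv i|.
pose Tv : R := \sum_(i < n) `|qv i|.
have hUV : Tu + Tv = l1norm a + l1norm b.
  rewrite /Tu /Tv /l1norm -!big_split; apply: eq_bigr => i _ /=.
  by rewrite /pv /qv /=; case: ifP => _; rewrite // addrC.
have hpk : pv k = a 0 k by rewrite /pv (ltW hk).
have hqk : qv k = b 0 k by rewrite /qv (ltW hk).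
have hUb : `|b 0 k| - `|a 0 k| <= l1norm b - Tu.
  rewrite /Tu /l1norm -sumrB (bigD1 k) //= hpk lerDl.
  apply: sumr_ge0 => i _; rewrite /pv; case: ifP => h; last by rewrite subrr.
  by rewrite subr_ge0.
have hTbu : Tu < l1norm b by move: hk hUb; lra.
pose M : R := Tv - Tu.
have hM : 0 < M by rewrite /M; move: hUV hTbu hab; lra.
pose ta : R := (l1norm a - Tu) / M.
pose tb : R := (l1norm b - Tu) / M.
have hta : 0 < ta by rewrite divr_gt0 //; lra.
have htb : 0 < tb by rewrite divr_gt0 //; lra.
have htaM : ta * M = l1norm a - Tu by rewrite /ta divfK // gt_eqF.
have htbM : tb * M = l1norm b - Tu by rewrite /tb divfK // gt_eqF.
have hsum : tb = 1 - ta.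
  have : (ta + tb) * M = 1 * M by rewrite mulrDl htaM htbM mul1r /M; lra.
  move/(mulIf (lt0r_neq0 hM)) => e; lra.
pose a' := \row_(i < n) (pv i + ta * (qv i - pv i)).
pose b' := \row_(i < n) (pv i + tb * (qv i - pv i)).
have nrm : forall t, 0 <= t -> t <= 1 ->
   l1norm (\row_(i < n) (pv i + t * (qv i - pv i))) <= Tu + t * M.
  move=> t t0 t1.
  have -> : Tu + t * M = \sum_(i < n) ((1 - t) * `|pv i| + t * `|qv i|).
    rewrite big_split /= -!mulr_sumr /M -/Tu -/Tv; ring.
  rewrite /l1norm; apply: ler_sum => i _; rewrite mxE.
  have -> : pv i + t * (qv i - pv i) = (1 - t) * pv i + t * qv i by ring.
  apply: le_trans (ler_normD _ _) _.
  by rewrite !normrM (ger0_norm t0) ger0_norm // subr_ge0.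
have na : l1norm a' <= l1norm a.
  have t1 : ta <= 1 by lra.
  by have := nrm ta (ltW hta) t1; rewrite htaM; lra.
have nb : l1norm b' <= l1norm b.
  have t1 : tb <= 1 by lra.
  by have := nrm tb (ltW htb) t1; rewrite htbM; lra.
pose G : R := \sum_(i < n) (qv i - pv i) ^+ 2.
have hG : 0 < G.
  rewrite /G (bigD1 k) //= hpk hqk.
  have : 0 < (b 0 k - a 0 k) ^+ 2.
    rewrite lt_neqAle sqr_ge0 andbT eq_sym sqrf_eq0 subr_eq0.
    by apply/eqP => e; rewrite e ltxx in hk.
  have : 0 <= \sum_(i < n | i != k) (qv i - pv i) ^+ 2 by apply: sumr_ge0 => i _; apply: sqr_ge0.
  lra.
have hid : sqnorm2 (z - a') + sqnorm2 (z - b') + 2 * ta * tb * G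
           = sqnorm2 (z - a) + sqnorm2 (z - b).
  rewrite /sqnorm2 /G mulr_sumr -!big_split; apply: eq_bigr => i _ /=.
  rewrite !mxE hsum /pv /qv; case: ifP => _; ring.
have A := oa Pa Ma a' (conj hPa (conj hMa (le_trans na hTa))).
have B := ob Pb Mb b' (conj hPb (conj hMb (le_trans nb hTb))).
move: A B; rewrite /obj.
have : l1 * l1norm a' <= l1 * l1norm a by rewrite ler_wpM2l // ltW.
have : l2 * l1norm b' <= l2 * l1norm b by rewrite ler_wpM2l // ltW.
have : 0 < 2 * ta * tb * G by apply: mulr_gt0 => //; apply: mulr_gt0 => //; apply: mulr_gt0.
move: hid.
move: (2 * ta * tb * G) (sqnorm2 (z - a')) (sqnorm2 (z - b')) (sqnorm2 (z - a)) (sqnorm2 (z - b)) => X S1 S2 S3 S4.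
move: (l1 * l1norm a') (l1 * l1norm a) (l2 * l1norm b') (l2 * l1norm b) => Y1 Y2 Y3 Y4.
lra.
Qed.

End S.
Arguments step1 {R n w z l1 l2 Pa Ma ta Pb Mb tb}.
Arguments step2 {R n w z l1 l2 Pa Ma a Pb Mb b}.

Theorem proposition2 (R : realType) (p : nat) (hp : (2 <= p)%N) (w : R)
  (hw : 0 <= w) (z : 'rV[R]_(p.-1))
  (bp bm : R -> R) (th : R -> 'rV[R]_(p.-1))
  (hsol : forall lam : R, 0 < lam ->
     is_unique_solution w z lam (bp lam) (bm lam) (th lam)) :
  forall k : 'I_(p.-1), forall l1 l2 : R, 0 < l1 -> l1 <= l2 ->
    `|th l2 0 k| <= `|th l1 0 k|.
Proof.
move=> k l1 l2 h1 h12.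
case: (eqVneq l1 l2) => [<-|ne]; first by [].
have hlt : l1 < l2 by rewrite lt_neqAle ne.
have h2 : 0 < l2 by apply: lt_trans hlt.
have [fa [oa _]] := hsol l1 h1.
have [fb [ob _]] := hsol l2 h2.
have H1 := step1 h1 hlt fa fb oa ob.
have H2 := step2 h1 h2 fa fb oa ob H1 k.
exact: H2.
Qed.
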